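(* Let $\mathcal C$ be a $k$-coloured operad admitting the presentation $(G,\leftrightarrow)$. Then the enveloping operad $\mathrm{Env}(\mathcal C)$ admits the presentation $(\{\mathfrak c(g):g\in G\},\leftrightarrow')$. Here $S'\leftrightarrow' T'$ if and only if $S\leftrightarrow T$, where $S'$ (resp. $T'$) denotes the uncoloured syntax tree obtained from the coloured syntax tree $S$ (resp. $T$) by replacing each node labelled $x$ by the corolla $\mathfrak c(x)$ (i.e. forgetting colours). In other words, $\mathrm{Env}(\mathcal C)$ is isomorphic to the free uncoloured operad on the elements of $G$ (colours forgotten) modulo the operadic congruence generated by the relations $S'\leftrightarrow'T'$.
   Context: All operads are nonsymmetric operads in the category of sets. Fix $k\ge1$ and write $[k]=\{1,\dots,k\}$. A $k$-coloured collection is a graded set $G=\biguplus_{n\ge2}G(n)$ with maps $\mathrm{Out},\mathrm{In}_i$ to $[k]$ ($1\le i\le n$ for elements of $G(n)$). The free $k$-coloured operad $\mathcal F(G)$ consists of coloured syntax trees on $G$: planar rooted trees whose internal nodes of arity $\ell$ are labelled by elements of $G(\ell)$, such that if a node labelled $y$ is the $i$th child of a node labelled $x$, then $\mathrm{In}_i(x)=\mathrm{Out}(y)$. Composition is grafting of a root on a leaf of matching colour, together with one unit per colour. A $k$-coloured operad $\mathcal C$ (partial compositions $x\circ_i y$ defined exactly when $\mathrm{Out}(y)=\mathrm{In}_i(x)$, with $\mathcal C(1)$ consisting only of one unit per colour, and each $\mathcal C(n)$ finite) admits the presentation $(G,\leftrightarrow)$ if $G$ is a $k$-coloured collection and $\leftrightarrow$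 is an equivalence relation on $\mathcal F(G)$ such that $\mathcal C$ is isomorphic to $\mathcal F(G)/\!\equiv$, where $\equiv$ is the smallest coloured operadic congruence containing $\leftrightarrow$. The same notion applies to uncoloured operads ($k=1$). Let $\mathcal C^+=\mathcal C\setminus\mathcal C(1)$. The enveloping operad $\mathrm{Env}(\mathcal C)$ is the quotient of the free uncoloured operad on $\mathcal C^+$ (colours forgotten) by the smallest operadic congruence with $\mathfrak c(x)\circ_i\mathfrak c(y)\equiv\mathfrak c(x\circ_i y)$ whenever $x\circ_i y$ is defined in $\mathcal C$. Here $\mathfrak c(x)$ denotes the corolla (one-node tree) labelled $x$. *)

(* Defs.v *)
From mathcomp Require Import all_boot.
From Stdlib Require List.

Set Implicit Arguments.
Unset Strict Implicit.
Unset Printing Implicit Defensive.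

(* Leaves carry a label in A (a colour for coloured trees, [unit] for   *)
(* Indices of inputs / leaves are 0-based (paper's i is our i-1).      *)

Inductive tree (A L : Type) : Type :=
| Leaf of A
| Node of L & seq (tree A L).

Arguments Leaf {A L} _.
Arguments Node {A L} _ _.

Fixpoint leaves {A L} (t : tree A L) : seq A :=
  match t with
  | Leaf a => [:: a]
  | Node _ ts => flatten (map leaves ts)
  end.

Definition nleaves {A L} (t : tree A L) : nat := size (leaves t).

Fixpoint graft {A L} (t : tree A L) (i : nat) (u : tree A L) : tree A L :=
  match t with
  | Leaf _ => if i == 0 then u else t
  | Node x ts =>
      Node x ((fix gs (ts : seq (tree A L)) (i : nat) : seq (tree A L) :=
                 match ts with
                 | [::] => [::]
                 | t0 :: ts' =>
                     if i < nleaves t0 then graft t0 i u :: ts'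
                     else t0 :: gs ts' (i - nleaves t0)
                 end) ts i)
  end.

(* An element x has output colour [op_out x] and list of input colours *)
(* [op_ins x]; its arity is [size (op_ins x)].  [op_comp x i y] is the *)
(* partial composition x o_{i+1} y; it is only meaningful (and only    *)
(* constrained) when i < arity x and Out(y) = In_i(x).                 *)

Record coperad (k : nat) := COperad {
  op_car : Type;
  op_out : op_car -> 'I_k;
  op_ins : op_car -> seq 'I_k;
  op_comp : op_car -> nat -> op_car -> op_car;
  op_unit : 'I_k -> op_car }.

Arguments op_out {k} c _.
Arguments op_ins {k} c _.
Arguments op_comp {k} c _ _ _.
Arguments op_unit {k} c _.

Definition op_ar {k} (C : coperad k) (x : op_car C) : nat := size (op_ins C x).
Definition op_in {k} (C : coperad k) (x : op_car C) (i : nat) : 'I_k :=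
  nth (op_out C x) (op_ins C x) i.
Arguments op_ar {k} C x.
Arguments op_in {k} C x i.

Definition is_coperad {k} (C : coperad k) : Prop :=
  (forall c, op_out C (op_unit C c) = c /\ op_ins C (op_unit C c) = [:: c]) /\
  (forall x i y, i < op_ar C x -> op_out C y = op_in C x i ->
      op_out C (op_comp C x i y) = op_out C x /\
      op_ins C (op_comp C x i y) =
        take i (op_ins C x) ++ op_ins C y ++ drop i.+1 (op_ins C x)) /\
  (forall x, op_comp C (op_unit C (op_out C x)) 0 x = x) /\
  (forall x i, i < op_ar C x -> op_comp C x i (op_unit C (op_in C x i)) = x) /\
  (forall x y z i j, i < op_ar C x -> j < op_ar C y ->
      op_out C y = op_in C x i -> op_out C z = op_in C y j ->
      op_comp C x i (op_comp C y j z) = op_comp C (op_comp C x i y) (i + j) z) /\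
  (forall x y z i j, i < j -> j < op_ar C x ->
      op_out C y = op_in C x i -> op_out C z = op_in C x j ->
      op_comp C (op_comp C x i y) (j + op_ar C y - 1) z =
      op_comp C (op_comp C x j z) i y) /\
  (forall x, op_ar C x = 1 -> x = op_unit C (op_out C x)) /\
  (forall n, exists l : seq (op_car C), forall x, op_ar C x = n -> List.In x l).

(* wf: membership in the free operad; prof: the profile (arity and     *)
(* colours) that congruent elements must share; ok S i T: S o_i T is   *)
(* defined; gr: the composition.                                       *)

Definition is_congruence {X P : Type} (wf : X -> bool) (prof : X -> P)
    (ok : X -> nat -> X -> bool) (gr : X -> nat -> X -> X)
    (R : X -> X -> Prop) : Prop :=
  (forall S T, R S T -> wf S /\ wf T /\ prof S = prof T) /\
  (forall S, wf S -> R S S) /\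
  (forall S T, R S T -> R T S) /\
  (forall S T U, R S T -> R T U -> R S U) /\
  (forall S S' T T' i, R S S' -> R T T' -> ok S i T ->
      R (gr S i T) (gr S' i T')).

Definition gen_cong {X P : Type} (wf : X -> bool) (prof : X -> P)
    (ok : X -> nat -> X -> bool) (gr : X -> nat -> X -> X)
    (R : X -> X -> Prop) (S T : X) : Prop :=
  forall R' : X -> X -> Prop, is_congruence wf prof ok gr R' ->
    (forall a b, R a b -> R' a b) -> R' S T.

Definition is_equiv_on {X : Type} (wf : X -> bool) (R : X -> X -> Prop) : Prop :=
  (forall S T, R S T -> wf S /\ wf T) /\
  (forall S, wf S -> R S S) /\
  (forall S T, R S T -> R T S) /\
  (forall S T U, R S T -> R T U -> R S U).

(* Coloured syntax trees: leaves carry colours (a leaf of colour c is  *)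
(* the unit of colour c / an input of that colour).                    *)

Section Coloured.
Variables (k : nat) (G : Type) (Gout : G -> 'I_k) (Gin : G -> seq 'I_k).

Definition ctree := tree 'I_k G.

Definition cout (t : ctree) : 'I_k :=
  match t with Leaf c => c | Node x _ => Gout x end.

Fixpoint cwf (t : ctree) : bool :=
  match t with
  | Leaf _ => true
  | Node x ts => (map cout ts == Gin x) && all cwf ts
  end.

Definition cprof (t : ctree) : 'I_k * seq 'I_k := (cout t, leaves t).

Definition cok (S : ctree) (i : nat) (T : ctree) : bool :=
  (i < nleaves S) && (cout T == nth (cout T) (leaves S) i).

Definition ccong (R : ctree -> ctree -> Prop) : ctree -> ctree -> Prop :=
  gen_cong cwf cprof cok graft R.

Definition ccor (g : G) : ctree := Node g (map Leaf (Gin g)).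

Fixpoint forget (t : ctree) : tree unit G :=
  match t with
  | Leaf _ => Leaf tt
  | Node x ts => Node x (map forget ts)
  end.

End Coloured.

(** C admits the presentation (G, R), witnessed by phi: phi is a morphism
    of coloured operads F(G) -> C which is surjective and whose kernel is
    exactly the congruence generated by R; i.e. phi induces an isomorphism
    F(G)/== ~ C. *)
Definition presents {k : nat} (C : coperad k) {G : Type}
    (Gout : G -> 'I_k) (Gin : G -> seq 'I_k)
    (R : ctree k G -> ctree k G -> Prop) (phi : ctree k G -> op_car C) : Prop :=
  (forall c, phi (Leaf c) = op_unit C c) /\
  (forall S, cwf Gout Gin S ->
     op_out C (phi S) = cout Gout S /\ op_ins C (phi S) = leaves S) /\
  (forall S i T, cwf Gout Gin S -> cwf Gout Gin T -> cok Gout S i T ->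
     phi (graft S i T) = op_comp C (phi S) i (phi T)) /\
  (forall x, exists S, cwf Gout Gin S /\ phi S = x) /\
  (forall S T, cwf Gout Gin S -> cwf Gout Gin T ->
     (phi S = phi T <-> ccong Gout Gin R S T)).
Arguments presents {k} C {G} Gout Gin R phi.

Fixpoint uwf {L : Type} (ar : L -> nat) (t : tree unit L) : bool :=
  match t with
  | Leaf _ => true
  | Node x ts => (size ts == ar x) && all (uwf ar) ts
  end.

Definition uok {L : Type} (S : tree unit L) (i : nat) (T : tree unit L) : bool :=
  i < nleaves S.

Definition ucong {L : Type} (ar : L -> nat)
    (R : tree unit L -> tree unit L -> Prop) : tree unit L -> tree unit L -> Prop :=
  gen_cong (uwf ar) nleaves uok graft R.

Definition ucor {L : Type} (ar : L -> nat) (x : L) : tree unit L :=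
  Node x (nseq (ar x) (Leaf tt)).

(** C^+ : the elements of C of arity >= 2 (C(0) is empty, C(1) = units) *)
Definition Cplus {k : nat} (C : coperad k) : Type :=
  {x : op_car C | 1 < op_ar C x}.

Definition plus_ar {k : nat} (C : coperad k) (x : Cplus C) : nat :=
  op_ar C (proj1_sig x).
Arguments plus_ar {k} C x.

Definition env_rel {k : nat} (C : coperad k)
    (S T : tree unit (Cplus C)) : Prop :=
  exists (x y xy : Cplus C) (i : nat),
    i < plus_ar C x /\
    op_out C (proj1_sig y) = op_in C (proj1_sig x) i /\
    proj1_sig xy = op_comp C (proj1_sig x) i (proj1_sig y) /\
    S = graft (ucor (plus_ar C) x) i (ucor (plus_ar C) y) /\
    T = ucor (plus_ar C) xy.

Arguments env_rel {k} C S T.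

(** the congruence defining Env(C) = F(C^+)/env_cong *)
Definition env_cong {k : nat} (C : coperad k) :
    tree unit (Cplus C) -> tree unit (Cplus C) -> Prop :=
  ucong (plus_ar C) (env_rel C).
Arguments env_cong {k} C _ _.

Definition forget_rel {k : nat} {G : Type} (R : ctree k G -> ctree k G -> Prop)
    (A B : tree unit G) : Prop :=
  exists S T, R S T /\ A = forget S /\ B = forget T.

(* Main.v *)
Require Import Defs.
From mathcomp Require Import all_boot zify.
From Stdlib Require Import IndefiniteDescription.

Set Implicit Arguments.
Unset Strict Implicit.
Unset Printing Implicit Defensive.

Section Trees.
Variables (A L : Type).
Implicit Types (t u w : tree A L) (ts us : seq (tree A L)).

Lemma tree_ind' (P : tree A L -> Prop) :
  (forall a, P (Leaf a)) ->
  (forall x ts, (forall t, List.In t ts -> P t) -> P (Node x ts)) ->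
  forall t, P t.
Proof.
move=> HL HN.
refine (fix F t := match t with Leaf a => HL a | Node x ts => HN x ts _ end).
refine ((fix G (ts : seq (tree A L)) : forall t, List.In t ts -> P t :=
   match ts with [::] => fun t H => False_ind _ H
   | t0 :: ts' => fun t H => match H with or_introl E => _ | or_intror H' => G ts' t H' end end) ts).
rewrite -E; exact: F.
Defined.

Fixpoint gsl u ts i : seq (tree A L) :=
  match ts with
  | [::] => [::]
  | t0 :: ts' => if i < nleaves t0 then graft t0 i u :: ts'
                 else t0 :: gsl u ts' (i - nleaves t0)
  end.

Lemma graft_node x ts i u : graft (Node x ts) i u = Node x (gsl u ts i).
Proof. by rewrite /=; congr Node; elim: ts i => //= t0 ts IH i; rewrite IH. Qed.

Lemma nleaves_node x ts : nleaves (Node x ts) = sumn (map nleaves ts).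
Proof. by rewrite /nleaves /= size_flatten /shape -map_comp. Qed.

Lemma gsl_dec u ts i : i < sumn (map nleaves ts) ->
  exists ts1 t ts2 j, [/\ ts = ts1 ++ t :: ts2, i = sumn (map nleaves ts1) + j,
    j < nleaves t & gsl u ts i = ts1 ++ graft t j u :: ts2].
Proof.
elim: ts i => [|t0 ts IH] i //= Hi.
case: ifP => Hlt.
  by exists [::], t0, ts, i.
have /IH [ts1 [t [ts2 [j [E1 E2 E3 E4]]]]] : i - nleaves t0 < sumn (map nleaves ts) by lia.
exists (t0 :: ts1), t, ts2, j; split => //=; [by rewrite E1| lia| by rewrite E4].
Qed.

Lemma gsl_pre u pre t post j : j < nleaves t ->
  gsl u (pre ++ t :: post) (sumn (map nleaves pre) + j) = pre ++ graft t j u :: post.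
Proof.
move=> Hj; elim: pre => [|t0 pre IH] /=; first by rewrite Hj.
have -> : nleaves t0 + sumn (map nleaves pre) + j < nleaves t0 = false by lia.
by rewrite -IH; congr (_ :: gsl _ _ _); lia.
Qed.

Lemma graft_pre x pre a post u :
  graft (Node x (pre ++ Leaf a :: post)) (sumn (map nleaves pre)) u = Node x (pre ++ u :: post).
Proof. by rewrite graft_node -(addn0 (sumn _)) gsl_pre. Qed.

Lemma leaves_graft t i u : i < nleaves t ->
  leaves (graft t i u) = take i (leaves t) ++ leaves u ++ drop i.+1 (leaves t).
Proof.
elim/tree_ind': t i => [a|x ts IH] i.
  by rewrite /nleaves /=; case: i => //= _; rewrite cats0.
rewrite nleaves_node => Hi; rewrite graft_node.
have [ts1 [t [ts2 [j [E1 E2 E3 E4]]]]] := gsl_dec u Hi.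
rewrite E4 /= E1 !map_cat !flatten_cat /= IH //; last by rewrite E1; apply/List.in_or_app; right; left.
have Hs : size (flatten (map leaves ts1)) = sumn (map nleaves ts1).
  by rewrite size_flatten /shape -map_comp.
rewrite E2 take_cat drop_cat Hs.
have -> : sumn (map nleaves ts1) + j < sumn (map nleaves ts1) = false by lia.
have -> : (sumn (map nleaves ts1) + j).+1 < sumn (map nleaves ts1) = false by lia.
have -> : sumn (map nleaves ts1) + j - sumn (map nleaves ts1) = j by lia.
have -> : (sumn (map nleaves ts1) + j).+1 - sumn (map nleaves ts1) = j.+1 by lia.
rewrite take_cat drop_cat /nleaves in E3 *.
rewrite E3. case: (ltngtP j.+1 (size (leaves t))) => H.
- by rewrite !catA.
- lia.
by rewrite H drop_size subnn drop0 cats0 !catA.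
Qed.

Lemma nleaves_graft t i u : i < nleaves t ->
  nleaves (graft t i u) = nleaves t + nleaves u - 1.
Proof.
move=> Hi; rewrite {1}/nleaves leaves_graft // !size_cat size_take size_drop.
rewrite /nleaves in Hi *; rewrite Hi; lia.
Qed.

Lemma gsl_size u ts i : size (gsl u ts i) = size ts.
Proof. by elim: ts i => //= t0 ts IH i; case: ifP => //= _; rewrite IH. Qed.

End Trees.

Lemma map_In (T U : Type) (f g : T -> U) (s : seq T) :
  (forall t, List.In t s -> f t = g t) -> map f s = map g s.
Proof. elim: s => //= a s IH H; rewrite H; last by left.
by rewrite IH // => t Ht; apply: H; right. Qed.

Lemma In_cons (T : Type) (P : T -> Prop) a s :
  (forall t, List.In t (a :: s) -> P t) -> P a /\ (forall t, List.In t s -> P t).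
Proof. by move=> H; split; [apply: H; left | move=> t Ht; apply: H; right]. Qed.

Lemma In_mid (T : Type) (s1 s2 : seq T) a : List.In a (s1 ++ a :: s2).
Proof. by apply/List.in_or_app; right; left. Qed.

Lemma graft_leaf_unit (L : Type) (t : tree unit L) i : graft t i (Leaf tt) = t.
Proof.
elim/tree_ind': t i => [[]|x ts IH] i; first by rewrite /=; case: (i == 0).
rewrite graft_node; congr Node; elim: ts i IH => //= t0 ts IHts i IH0; case: (In_cons IH0) => H0 IH.
by case: ifP => _; [rewrite H0 | rewrite IHts].
Qed.

Fixpoint tmap (A B L M : Type) (fa : A -> B) (fl : L -> M) (t : tree A L) : tree B M :=
  match t with
  | Leaf a => Leaf (fa a)
  | Node x ts => Node (fl x) (map (tmap fa fl) ts)
  end.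

Lemma leaves_tmap A B L M (fa : A -> B) (fl : L -> M) t :
  leaves (tmap fa fl t) = map fa (leaves t).
Proof.
elim/tree_ind': t => [a|x ts IH] //=.
rewrite map_flatten -!map_comp; congr flatten; exact: map_In.
Qed.

Lemma nleaves_tmap A B L M (fa : A -> B) (fl : L -> M) t :
  nleaves (tmap fa fl t) = nleaves t.
Proof. by rewrite /nleaves leaves_tmap size_map. Qed.

Lemma tmap_graft A B L M (fa : A -> B) (fl : L -> M) t i u :
  tmap fa fl (graft t i u) = graft (tmap fa fl t) i (tmap fa fl u).
Proof.
elim/tree_ind': t i => [a|x ts IH] i; first by rewrite /=; case: ifP.
rewrite graft_node [tmap _ _ (Node x ts)]/= graft_node /=; congr Node.
elim: ts i IH => //= t0 ts IHts i IH0; case: (In_cons IH0) => H0 IH.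
by rewrite nleaves_tmap; case: ifP => _ /=; [rewrite H0 | rewrite IHts].
Qed.

Section Subst.
Variables (A L : Type).
Implicit Types (t u w : tree A L) (ts us : seq (tree A L)).

Fixpoint subst t us : tree A L :=
  match t with
  | Leaf _ => head t us
  | Node x ts => Node x ((fix ss ts us := match ts with
       | [::] => [::]
       | t0 :: ts' => subst t0 (take (nleaves t0) us) :: ss ts' (drop (nleaves t0) us)
       end) ts us)
  end.

Fixpoint substs ts us : seq (tree A L) :=
  match ts with
  | [::] => [::]
  | t0 :: ts' => subst t0 (take (nleaves t0) us) :: substs ts' (drop (nleaves t0) us)
  end.

Lemma subst_node x ts us : subst (Node x ts) us = Node x (substs ts us).
Proof. by rewrite /=; congr Node; elim: ts us => //= t0 ts IH us; rewrite IH. Qed.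

Lemma size_substs ts us : size (substs ts us) = size ts.
Proof. by elim: ts us => //= t0 ts IH us; rewrite IH. Qed.

Lemma sumn_take_drop (s : seq nat) n : sumn s = sumn (take n s) + sumn (drop n s).
Proof. by rewrite -sumn_cat cat_take_drop. Qed.

Lemma nleaves_subst t us : size us = nleaves t ->
  nleaves (subst t us) = sumn (map nleaves us).
Proof.
elim/tree_ind': t us => [a|x ts IH] us.
  by case: us => [|u [|]] //= _; rewrite addn0.
rewrite subst_node !nleaves_node.
elim: ts us IH => [|t0 ts IHts] us IH0; first by case: us.
case: (In_cons IH0) => H0 IH /= Hs.
have Hd : size (drop (nleaves t0) us) = sumn (map nleaves ts) by rewrite size_drop Hs; lia.
have Ht : size (take (nleaves t0) us) = nleaves t0 by rewrite size_take Hs; case: ifP => //; lia.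
by rewrite H0 // IHts // [in RHS](sumn_take_drop _ (nleaves t0)) map_take map_drop.
Qed.

Lemma drop_cat_le (T : Type) (s1 s2 : seq T) n : n <= size s1 ->
  drop n (s1 ++ s2) = drop n s1 ++ s2.
Proof. by move=> H; rewrite drop_cat; case: ltngtP H => // -> _; rewrite subnn drop_size drop0. Qed.

Lemma take_cat_le (T : Type) (s1 s2 : seq T) n : n <= size s1 ->
  take n (s1 ++ s2) = take n s1.
Proof. by move=> H; rewrite take_cat; case: ltngtP H => // -> _; rewrite subnn take_size take0 cats0. Qed.

Lemma subst_graft t us1 u us2 j w : size (us1 ++ u :: us2) = nleaves t -> j < nleaves u ->
  graft (subst t (us1 ++ u :: us2)) (sumn (map nleaves us1) + j) w =
  subst t (us1 ++ graft u j w :: us2).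
Proof.
elim/tree_ind': t us1 u us2 j w => [a|x ts IH] us1 u us2 j w.
  by case: us1 => [|? []] //=; case: us2.
rewrite !subst_node graft_node nleaves_node => Hs Hj; congr Node.
elim: ts us1 IH Hs => [|t0 ts IHts] us1 IH0; first by rewrite size_cat /=; lia.
case: (In_cons IH0) => H0 IH /= Hs.
case: (ltnP (size us1) (nleaves t0)) => Hlt.
  have Hk : nleaves t0 = size us1 + (nleaves t0 - size us1 - 1).+1 by lia.
  have E1 : forall v, take (nleaves t0) (us1 ++ v :: us2) =
                      us1 ++ v :: take (nleaves t0 - size us1 - 1) us2.
    move=> v; rewrite take_cat ifF; last lia.
    case E: (nleaves t0 - size us1) => [|m]; first lia.
    by rewrite /= subn1.
  have E2 : forall v, drop (nleaves t0) (us1 ++ v :: us2) =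
                      drop (nleaves t0 - size us1 - 1) us2.
    move=> v; rewrite drop_cat ifF; last lia.
    case E: (nleaves t0 - size us1) => [|m]; first lia.
    by rewrite /= subn1.
  have Hsz : size (us1 ++ u :: take (nleaves t0 - size us1 - 1) us2) = nleaves t0.
    by rewrite size_cat /= size_take; move: Hs; rewrite size_cat /=; case: ifP; lia.
  rewrite E1 nleaves_subst // map_cat sumn_cat /=.
  have -> : sumn (map nleaves us1) + j < sumn (map nleaves us1) +
     (nleaves u + sumn (map nleaves (take (nleaves t0 - size us1 - 1) us2))) = true by lia.
  by rewrite H0 // E1 !E2.
have E1 : forall v, take (nleaves t0) (us1 ++ v :: us2) = take (nleaves t0) us1.
  by move=> v; rewrite take_cat_le.
have E2 : forall v, drop (nleaves t0) (us1 ++ v :: us2) = drop (nleaves t0) us1 ++ v :: us2.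
  by move=> v; rewrite drop_cat_le.
have Hsz : size (take (nleaves t0) us1) = nleaves t0 by rewrite size_take; case: ltngtP Hlt; lia.
rewrite !E1 !E2 nleaves_subst //.
have Hsum := sumn_take_drop (map nleaves us1) (nleaves t0).
rewrite -map_take -map_drop in Hsum.
have -> : sumn (map nleaves us1) + j < sumn (map nleaves (take (nleaves t0) us1)) = false by lia.
have -> : sumn (map nleaves us1) + j - sumn (map nleaves (take (nleaves t0) us1)) =
          sumn (map nleaves (drop (nleaves t0) us1)) + j by lia.
rewrite IHts //.
by move: Hs; rewrite !size_cat size_drop /=; lia.
Qed.

Lemma substs_leaves (l : seq A) us : size us = size l -> substs (map Leaf l) us = us.
Proof. by elim: l us => [|a l IH] [|u us] //= [Hs]; rewrite drop0 IH. Qed.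

Lemma subst_id t : subst t (map Leaf (leaves t)) = t.
Proof.
elim/tree_ind': t => [a|x ts IH] //; rewrite subst_node /=; congr Node.
elim: ts IH => //= t0 ts IHts IH0; case: (In_cons IH0) => H0 IH.
rewrite map_cat /nleaves -(size_map (@Leaf A L)) take_size_cat // drop_size_cat //.
by rewrite H0 IHts.
Qed.

End Subst.

Lemma tmap_subst A B L M (fa : A -> B) (fl : L -> M) t us :
  tmap fa fl (subst t us) = subst (tmap fa fl t) (map (tmap fa fl) us).
Proof.
elim/tree_ind': t us => [a|x ts IH] us; first by case: us.
rewrite subst_node [tmap _ _ (Node x ts)]/= subst_node /=; congr Node.
elim: ts us IH => //= t0 ts IHts us IH0; case: (In_cons IH0) => H0 IH.
by rewrite H0 IHts // nleaves_tmap map_take map_drop.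
Qed.



Section Uwf.
Variables (L : Type) (ar : L -> nat).
Implicit Types (t u : tree unit L) (ts us : seq (tree unit L)).

Lemma uwf_graft t i u : uwf ar t -> uwf ar u -> uwf ar (graft t i u).
Proof.
elim/tree_ind': t i => [[]|x ts IH] i; first by rewrite /=; case: (i == 0).
rewrite graft_node /= gsl_size => /andP [-> Ha] Hu /=.
elim: ts i IH Ha => //= t0 ts IHts i IH0 /andP [H0 Ha]; case: (In_cons IH0) => IH0' IH.
by case: ifP => _ /=; [rewrite IH0' // Ha | rewrite H0 IHts].
Qed.

Lemma all_take_drop (T : Type) (P : pred T) n s : all P s -> all P (take n s) && all P (drop n s).
Proof. by rewrite -{1}(cat_take_drop n s) all_cat. Qed.

Lemma uwf_subst t us : uwf ar t -> all (uwf ar) us -> size us = nleaves t -> uwf ar (subst t us).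
Proof.
elim/tree_ind': t us => [a|x ts IH] us.
  by case: us => [|u [|]] //= _ /andP [].
rewrite subst_node nleaves_node /= size_substs => /andP [-> Ha] Hus /=.
elim: ts us IH Ha Hus => //= t0 ts IHts us IH0 /andP [H0 Ha] Hus Hs.
case: (In_cons IH0) => IH0' IH.
case/andP: (all_take_drop (nleaves t0) Hus) => H1 H2.
rewrite IH0' //; last by rewrite size_take Hs; case: ifP => //; lia.
by rewrite IHts // size_drop Hs; lia.
Qed.


Lemma uwf_ucor x : uwf ar (ucor ar x).
Proof. by rewrite /= size_nseq eqxx /=; elim: (ar x). Qed.

Lemma subst_ucor x us : size us = ar x -> subst (ucor ar x) us = Node x us.
Proof. by move=> Hs; rewrite /ucor subst_node -map_nseq substs_leaves // size_nseq. Qed.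

Lemma unit_seq (s : seq unit) : s = nseq (size s) tt.
Proof. by elim: s => //= -[] s <-. Qed.

Lemma subst_id_unit t : subst t (nseq (nleaves t) (Leaf tt)) = t.
Proof. by have := subst_id t; rewrite {1}(unit_seq (leaves t)) map_nseq. Qed.

Lemma sumn_nleaves_nseq n : sumn (map nleaves (nseq n (Leaf tt : tree unit L))) = n.
Proof. by elim: n => //= n ->; rewrite /nleaves /= add1n. Qed.

Lemma nleaves_ucor x : nleaves (ucor ar x) = ar x.
Proof. by rewrite /ucor nleaves_node sumn_nleaves_nseq. Qed.

End Uwf.

Fixpoint ext (L M : Type) (f : L -> tree unit M) (t : tree unit L) : tree unit M :=
  match t with
  | Leaf a => Leaf a
  | Node x ts => subst (f x) (map (ext f) ts)
  end.

Section Ext.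
Variables (L M : Type) (ar : L -> nat) (ar' : M -> nat) (f : L -> tree unit M).
Hypothesis Hf : forall x, nleaves (f x) = ar x.
Hypothesis Hf' : forall x, uwf ar' (f x).

Lemma nleaves_ext t : uwf ar t -> nleaves (ext f t) = nleaves t.
Proof.
elim/tree_ind': t => [a|x ts IH] //= /andP [/eqP Hs Ha].
rewrite nleaves_subst; last by rewrite size_map Hs.
rewrite nleaves_node -map_comp; congr sumn.
elim: ts IH Ha {Hs} => //= t0 ts IHts IH0 /andP [H0 Ha]; case: (In_cons IH0) => IH0' IH.
by rewrite /= IH0' // IHts.
Qed.

Lemma uwf_ext t : uwf ar t -> uwf ar' (ext f t).
Proof.
elim/tree_ind': t => [a|x ts IH] //= /andP [/eqP Hs Ha].
apply: uwf_subst => //; last by rewrite size_map Hs.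
elim: ts IH Ha {Hs} => //= t0 ts IHts IH0 /andP [H0 Ha]; case: (In_cons IH0) => IH0' IH.
by rewrite IH0' // IHts.
Qed.

Lemma ext_graft t i u : uwf ar t -> i < nleaves t ->
  ext f (graft t i u) = graft (ext f t) i (ext f u).
Proof.
elim/tree_ind': t i => [[]|x ts IH] i.
  by rewrite /nleaves /=; case: i.
move=> Hw; rewrite nleaves_node graft_node => Hi.
have [ts1 [t [ts2 [j [E1 E2 E3 E4]]]]] := gsl_dec u Hi.
move: Hw; rewrite /= E4 E1 => /andP [/eqP Hs Ha].
rewrite all_cat /= in Ha; case/and3P: Ha => Ha1 Ht Ha2.
rewrite !map_cat /= IH ?E1 //; last exact: In_mid.
have -> : i = sumn (map nleaves (map (ext f) ts1)) + j.
  rewrite E2 -map_comp; congr (sumn _ + _).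
  elim: ts1 Ha1 {E1 E4 Hs E2} => //= t1 ts1 IHts /andP [H1 Ha].
  by rewrite /= nleaves_ext // IHts.
rewrite subst_graft //.
  by rewrite size_cat /= !size_map Hf -Hs size_cat.
by rewrite nleaves_ext.
Qed.

Lemma ext_ucor x : ext f (ucor ar x) = f x.
Proof.
by rewrite /ucor /= map_nseq /= -Hf subst_id_unit.
Qed.

End Ext.

Section Cong.
Variables (X P : Type) (wf : X -> bool) (prof : X -> P) (ok : X -> nat -> X -> bool)
  (gr : X -> nat -> X -> X).

Lemma gen_cong_incl (R : X -> X -> Prop) a b : R a b -> gen_cong wf prof ok gr R a b.
Proof. by move=> H R' _ HR; apply: HR. Qed.

Lemma gen_cong_congr (R R0 : X -> X -> Prop) : is_congruence wf prof ok gr R0 ->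
  (forall a b, R a b -> R0 a b) -> is_congruence wf prof ok gr (gen_cong wf prof ok gr R).
Proof.
move=> HR0 Hincl; split; [|split; [|split; [|split]]].
- by move=> S T H; apply: (proj1 HR0); apply: H.
- by move=> S HS R' [_ [H _]] _; apply: H.
- by move=> S T H R' HR' Hi; apply: (proj1 (proj2 (proj2 HR'))); apply: H.
- by move=> S T U H1 H2 R' HR' Hi; apply: (proj1 (proj2 (proj2 (proj2 HR')))) (H1 R' HR' Hi) (H2 R' HR' Hi).
- by move=> S S' T T' i H1 H2 Hok R' HR' Hi; apply: (proj2 (proj2 (proj2 (proj2 HR')))) (H1 R' HR' Hi) (H2 R' HR' Hi) Hok.
Qed.
End Cong.

Section UCong.
Variables (L : Type) (ar : L -> nat).

Definition R0u (S T : tree unit L) : Prop := uwf ar S /\ uwf ar T /\ nleaves S = nleaves T.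

Lemma R0u_congr : is_congruence (uwf ar) nleaves uok graft R0u.
Proof.
split; [|split; [|split; [|split]]].
- by move=> S T [? [? ?]].
- by [].
- by move=> S T [? [? ?]].
- by move=> S T U [? [? H1]] [? [? H2]]; rewrite /R0u H1 H2.
- move=> S S' T T' i [H1 [H2 H3]] [H4 [H5 H6]] Hok; rewrite /uok in Hok.
  split; [|split]; try exact: uwf_graft.
  by rewrite !nleaves_graft -?H3 // H3 H6.
Qed.

Variable (R : tree unit L -> tree unit L -> Prop).
Hypothesis HR : is_congruence (uwf ar) nleaves uok graft R.

Lemma congr_refl t : uwf ar t -> R t t.
Proof. by move=> H; apply: (proj1 (proj2 HR)). Qed.

Lemma congr_sym s t : R s t -> R t s.
Proof. by move=> H; apply: (proj1 (proj2 (proj2 HR))). Qed.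

Lemma congr_trans s t u : R s t -> R t u -> R s u.
Proof. by move=> H; apply: (proj1 (proj2 (proj2 (proj2 HR)))). Qed.

Lemma congr_graft s s' t t' i : R s s' -> R t t' -> i < nleaves s -> R (graft s i t) (graft s' i t').
Proof. by move=> H1 H2 H3; apply: (proj2 (proj2 (proj2 (proj2 HR)))). Qed.

Lemma congr_prof s t : R s t -> [/\ uwf ar s, uwf ar t & nleaves s = nleaves t].
Proof. by move=> /(proj1 HR) [? [? ?]]. Qed.

Lemma cong_subst t t' us us' : R t t' -> size us' = size us ->
  (forall k, k < size us -> R (nth (Leaf tt) us k) (nth (Leaf tt) us' k)) ->
  size us = nleaves t -> R (subst t us) (subst t' us').
Proof.
move=> Htt Hs' Hk Hs.
have [_ _ Hn] := congr_prof Htt.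
have Hmap : map nleaves us = map nleaves us'.
  apply: (@eq_from_nth _ 0); first by rewrite !size_map.
  move=> m; rewrite size_map => Hm.
  rewrite (nth_map (Leaf tt)) // (nth_map (Leaf tt)) ?Hs' //.
  by have [] := congr_prof (Hk m Hm).
set n := nleaves t.
set Ls := nseq n (Leaf tt : tree unit L).
suff Hmain : forall m, m <= n -> R (subst t (take m us ++ drop m Ls)) (subst t' (take m us' ++ drop m Ls)).
  have := Hmain n (leqnn n).
  have E1 : take n us = us by rewrite take_oversize // Hs.
  have E2 : take n us' = us' by rewrite take_oversize // Hs' Hs.
  have E3 : drop n Ls = [::] by rewrite drop_oversize // size_nseq.
  by rewrite E1 E2 E3 !cats0.
elim => [_|m IHm Hle].
  by rewrite !take0 !drop0 /= /Ls {2}/n Hn !subst_id_unit.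
have Hmn : m < size Ls by rewrite size_nseq.
have HmL : nth (Leaf tt) Ls m = Leaf tt by rewrite nth_nseq; case: ifP.
rewrite (take_nth (Leaf tt)) ?Hs // (take_nth (Leaf tt)) ?Hs' ?Hs //.
rewrite -!cats1 -!catA /=.
have Hsz : forall (vs : seq (tree unit L)), size vs = size us ->
    size (take m vs ++ Leaf tt :: drop m.+1 Ls) = n.
  by move=> vs Hv; rewrite size_cat size_take Hv Hs /= size_drop size_nseq; case: ifP; lia.
have G1 : forall tt0 vs, size vs = size us -> nleaves tt0 = n -> subst tt0 (take m vs ++ nth (Leaf tt) vs m :: drop m.+1 Ls) =
   graft (subst tt0 (take m vs ++ Leaf tt :: drop m.+1 Ls)) (sumn (map nleaves (take m vs))) (nth (Leaf tt) vs m).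
  by move=> tt0 vs Hv Ht0; rewrite -[sumn _]addn0 subst_graft ?Hsz ?Ht0.
rewrite G1 // G1 ?Hs' //.
rewrite (drop_nth (Leaf tt)) // HmL in IHm.
have -> : sumn (map nleaves (take m us')) = sumn (map nleaves (take m us)) by rewrite !map_take Hmap.
apply: congr_graft; first by apply: IHm; lia.
  by apply: Hk; rewrite Hs; lia.
rewrite nleaves_subst; last by rewrite size_cat size_take Hs /= size_drop size_nseq; case: ifP; lia.
rewrite map_cat sumn_cat /= /nleaves /=; lia.
Qed.

Lemma cong_node x us us' : size us = ar x -> size us' = size us ->
  (forall k, k < size us -> R (nth (Leaf tt) us k) (nth (Leaf tt) us' k)) ->
  R (Node x us) (Node x us').
Proof.
move=> Hs Hs' Hk; rewrite -(@subst_ucor _ ar x us) // -(@subst_ucor _ ar x us') ?Hs' //.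
by apply: cong_subst => //; [apply: congr_refl; apply: uwf_ucor | rewrite nleaves_ucor].
Qed.


End UCong.

Lemma nth_map_In (T U : Type) (Rel : U -> U -> Prop) (d : U) (f g : T -> U) (s : seq T) :
  (forall t, List.In t s -> Rel (f t) (g t)) ->
  forall m, m < size s -> Rel (nth d (map f s) m) (nth d (map g s) m).
Proof.
elim: s => //= a s IH H [|m] Hm /=; first by apply: H; left.
by apply: IH => // t Ht; apply: H; right.
Qed.

Lemma nth_map_In_id (T : Type) (Rel : T -> T -> Prop) (d : T) (f : T -> T) (s : seq T) :
  (forall t, List.In t s -> Rel (f t) t) ->
  forall m, m < size s -> Rel (nth d (map f s) m) (nth d s m).
Proof. by move=> H m Hm; have := nth_map_In d H Hm; rewrite map_id. Qed.

Lemma all_In (T : Type) (P : pred T) (s : seq T) t : all P s -> List.In t s -> P t.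
Proof. by elim: s => //= a s IH /andP [Ha Hs] [<-|H] //; apply: IH. Qed.

Lemma flatten_singles (T : Type) (l : seq T) : flatten (map (fun c => [:: c]) l) = l.
Proof. by elim: l => //= a l ->. Qed.

Lemma In_nth (T : Type) (d : T) (s : seq T) m : m < size s -> List.In (nth d s m) s.
Proof. by elim: s m => //= a s IH [|m] /= Hm; [left | right; apply: IH]. Qed.

Lemma In_take (T : Type) (s : seq T) m t : List.In t (take m s) -> List.In t s.
Proof. by elim: s m => //= a s IH [|m] //= [->|H]; [left | right; apply: (IH m)]. Qed.

Section Main.
Variables (k : nat) (C : coperad k).
Hypothesis HC : is_coperad C.
Variables (G : Type) (Gout : G -> 'I_k) (Gin : G -> seq 'I_k).
Hypothesis HG : forall g, 2 <= size (Gin g).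
Variable R : ctree k G -> ctree k G -> Prop.
Hypothesis HR : is_equiv_on (cwf Gout Gin) R.
Variable phi : ctree k G -> op_car C.
Hypothesis Hphi : presents C Gout Gin R phi.

Local Notation gar := (fun g : G => size (Gin g)).
Local Notation CW := (cwf Gout Gin).
Local Notation cout := (cout Gout).
Local Notation ar := (op_ar C).
Local Notation Rf := (forget_rel R).
Implicit Types (S T : ctree k G).

Lemma HCu c : op_out C (op_unit C c) = c /\ op_ins C (op_unit C c) = [:: c].
Proof. by case: HC => H _; apply: H. Qed.
Lemma HCc x i y : i < ar x -> op_out C y = op_in C x i ->
      op_out C (op_comp C x i y) = op_out C x /\
      op_ins C (op_comp C x i y) = take i (op_ins C x) ++ op_ins C y ++ drop i.+1 (op_ins C x).
Proof. by case: HC => _ [H _]; apply: H. Qed.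
Lemma HClu x : op_comp C (op_unit C (op_out C x)) 0 x = x.
Proof. by case: HC => _ [_ [H _]]; apply: H. Qed.
Lemma HCru x i : i < ar x -> op_comp C x i (op_unit C (op_in C x i)) = x.
Proof. by case: HC => _ [_ [_ [H _]]]; apply: H. Qed.
Lemma HC1 x : ar x = 1 -> x = op_unit C (op_out C x).
Proof. by case: HC => _ [_ [_ [_ [_ [_ [H _]]]]]]; apply: H. Qed.

Lemma Q1 c : phi (Leaf c) = op_unit C c.
Proof. by case: Hphi => H _; apply: H. Qed.
Lemma Q2 S : CW S -> op_out C (phi S) = cout S /\ op_ins C (phi S) = leaves S.
Proof. by case: Hphi => _ [H _]; apply: H. Qed.
Lemma Q3 S i T : CW S -> CW T -> cok Gout S i T -> phi (graft S i T) = op_comp C (phi S) i (phi T).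
Proof. by case: Hphi => _ [_ [H _]]; apply: H. Qed.
Lemma Q4 x : exists S, CW S /\ phi S = x.
Proof. by case: Hphi => _ [_ [_ [H _]]]; apply: H. Qed.
Lemma Q5 S T : CW S -> CW T -> (phi S = phi T <-> ccong Gout Gin R S T).
Proof. by case: Hphi => _ [_ [_ [_ H]]]; apply: H. Qed.

Lemma ar_phi S : CW S -> ar (phi S) = nleaves S.
Proof. by move=> H; rewrite /op_ar (Q2 H).2. Qed.

Lemma cwf_pos S : CW S -> 0 < nleaves S.
Proof.
elim/tree_ind': S => [c|g ts IH]; first by rewrite /nleaves.
rewrite nleaves_node /= => /andP [/eqP Hm Ha].
have := HG g; rewrite -Hm; case: ts IH Ha {Hm} => //= t0 ts IH /andP [H0 _] _.
have := IH t0 (or_introl erefl) H0; lia.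
Qed.

Lemma leaves_ccor g : leaves (ccor Gin g) = Gin g.
Proof. by rewrite /= -map_comp flatten_singles. Qed.

Lemma cwf_ccor g : CW (ccor Gin g).
Proof. by rewrite /= -map_comp map_id eqxx /=; elim: (Gin g). Qed.

Lemma xg_proof g : 1 < ar (phi (ccor Gin g)).
Proof. by rewrite ar_phi ?cwf_ccor // /nleaves leaves_ccor; apply: HG. Qed.

Definition xg g : Cplus C := exist (fun x => 1 < ar x) (phi (ccor Gin g)) (xg_proof g).

Lemma plus_ar_xg g : plus_ar C (xg g) = size (Gin g).
Proof. by rewrite /plus_ar /= ar_phi ?cwf_ccor // /nleaves leaves_ccor. Qed.

Definition Theta : tree unit G -> tree unit (Cplus C) := tmap (@id unit) xg.

Lemma uwf_Theta (S : tree unit G) : uwf gar S -> uwf (plus_ar C) (Theta S).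
Proof.
elim/tree_ind': S => [a|g ts IH] //= /andP [/eqP Hs Ha].
rewrite size_map Hs plus_ar_xg eqxx /=.
elim: ts IH Ha {Hs} => //= t0 ts IHts IH0 /andP [H0 Ha]; case: (In_cons IH0) => H1 IH.
by rewrite H1 // IHts.
Qed.

Lemma forget_tmap S : forget S = tmap (fun _ => tt) id S.
Proof. by elim/tree_ind': S => [c|g ts IH] //=; congr Node; apply: map_In. Qed.

Lemma forget_graft S i T : forget (graft S i T) = graft (forget S) i (forget T).
Proof. by rewrite !forget_tmap tmap_graft. Qed.

Lemma nleaves_forget S : nleaves (forget S) = nleaves S.
Proof. by rewrite forget_tmap nleaves_tmap. Qed.

Lemma cwf_forget S : CW S -> uwf gar (forget S).
Proof.
elim/tree_ind': S => [c|g ts IH] //= /andP [/eqP Hm Ha].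
rewrite size_map -Hm size_map eqxx /=.
elim: ts IH Ha {Hm} => //= t0 ts IHts IH0 /andP [H0 Ha]; case: (In_cons IH0) => H1 IH.
by rewrite H1 // IHts.
Qed.

Lemma forget_ccor g : forget (ccor Gin g) = ucor gar g.
Proof. by rewrite /= /ucor; congr Node; elim: (Gin g) => //= c l ->. Qed.

Lemma cwf_graft S i T : CW S -> CW T -> cok Gout S i T ->
  CW (graft S i T) /\ cout (graft S i T) = cout S.
Proof.
elim/tree_ind': S i => [c|g ts IH] i.
  move=> _ HT /andP [Hi /eqP Hc]; rewrite /nleaves /= in Hi.
  by case: i Hi Hc => //= _ ->.
rewrite graft_node => /andP [/eqP Hm Ha] HT /andP [Hi /eqP Hc].
rewrite nleaves_node in Hi.
have [ts1 [t [ts2 [j [E1 E2 E3 E4]]]]] := gsl_dec T Hi.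
rewrite E4; split => //=.
move: Hm Ha Hc; rewrite E1 /= map_cat all_cat /= => Hm /and3P [Ha1 Ht Ha2] Hc.
have Hok : cok Gout t j T.
  rewrite /cok E3 /=; apply/eqP; rewrite {1}Hc flatten_cat /= E2 nth_cat.
  have Hs : size (flatten (map leaves ts1)) = sumn (map nleaves ts1).
    by rewrite size_flatten /shape -map_comp.
  rewrite Hs ifF; last by lia.
  by rewrite nth_cat addKn -/(nleaves t) E3.
have [IH1 IH2] := IH t (ltac:(rewrite E1; exact: In_mid)) j Ht HT Hok.
by rewrite -Hm !map_cat /= IH2 eqxx all_cat Ha1 /= IH1 Ha2.
Qed.

Lemma phi_R S T : R S T -> phi S = phi T.
Proof.
move=> H; case: HR => Hw _; have [cS cT] := Hw S T H.
by apply/(Q5 cS cT); apply: gen_cong_incl.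
Qed.

Lemma ucong_congr : is_congruence (uwf gar) nleaves uok graft (ucong gar Rf).
Proof.
apply: (gen_cong_congr (R0u_congr gar)) => a b [S [T [HST [-> ->]]]].
case: HR => Hw _; have [cS cT] := Hw S T HST.
split; [exact: cwf_forget | split; [exact: cwf_forget|]].
by rewrite !nleaves_forget -!ar_phi // (phi_R HST).
Qed.

Lemma env_rel_R0u a b : env_rel C a b -> R0u (plus_ar C) a b.
Proof.
move=> [x [y [xy [i [Hi [Hout [Hxy [-> ->]]]]]]]].
split; [apply: uwf_graft; apply: uwf_ucor | split; [apply: uwf_ucor|]].
rewrite nleaves_graft ?nleaves_ucor // /plus_ar Hxy /op_ar (HCc Hi Hout).2.
rewrite !size_cat size_take size_drop.
move: Hi; rewrite /plus_ar /op_ar => Hi; rewrite Hi; lia.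
Qed.

Lemma env_congr : is_congruence (uwf (plus_ar C)) nleaves uok graft (env_cong C).
Proof. exact: (gen_cong_congr (R0u_congr (plus_ar C)) env_rel_R0u). Qed.

Lemma ccong_forget S T : CW S -> CW T -> phi S = phi T -> ucong gar Rf (forget S) (forget T).
Proof.
move=> cS cT Heq; have Hc := (Q5 cS cT).1 Heq.
have UC := ucong_congr.
suff : [/\ CW S, CW T, cprof Gout S = cprof Gout T & ucong gar Rf (forget S) (forget T)] by case.
apply: (Hc (fun S T => [/\ CW S, CW T, cprof Gout S = cprof Gout T & ucong gar Rf (forget S) (forget T)])).
- split; [|split; [|split; [|split]]].
  + by move=> ? ? [].
  + by move=> S0 H0; split => //; apply: (congr_refl UC); apply: cwf_forget.
  + by move=> ? ? [? ? ? H]; split => //; apply: (congr_sym UC).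
  + by move=> ? ? ? [? ? E1 H1] [? ? E2 H2]; split => //; [rewrite E1 | apply: (congr_trans UC H1 H2)].
  + move=> S1 S1' T1 T1' i [c1 c2 p1 u1] [c3 c4 p2 u2] Hok.
    case: p1 => o1 l1; case: p2 => o2 l2.
    have Hok' : cok Gout S1' i T1' by rewrite /cok /nleaves -l1 -o2; exact: Hok.
    have Hi : i < nleaves S1 by case/andP: Hok.
    have [w1 e1] := cwf_graft c1 c3 Hok; have [w2 e2] := cwf_graft c2 c4 Hok'.
    split => //.
      rewrite /cprof e1 e2 o1 leaves_graft // leaves_graft; last by rewrite /nleaves -l1.
      by rewrite l1 l2.
    rewrite !forget_graft; apply: (congr_graft UC) => //; by rewrite nleaves_forget.
- move=> a b Hab; case: HR => Hw _; have [ca cb] := Hw a b Hab.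
  split => //; first by rewrite /cprof -(Q2 ca).1 -(Q2 ca).2 -(Q2 cb).1 -(Q2 cb).2 (phi_R Hab).
  by apply: gen_cong_incl; exists a, b.
Qed.

Definition E (z : op_car C) : tree unit (Cplus C) :=
  match insub z with Some x => ucor (plus_ar C) x | None => Leaf tt end.

Lemma E_val (x : Cplus C) : E (val x) = ucor (plus_ar C) x.
Proof. by rewrite /E valK. Qed.
Lemma E_small z : ar z <= 1 -> E z = Leaf tt.
Proof. by move=> H; rewrite /E insubF //; apply/negbTE; rewrite -leqNgt. Qed.
Lemma E_big z (H : 1 < ar z) : E z = ucor (plus_ar C) (exist _ z H).
Proof. by rewrite /E insubT. Qed.

Lemma uwf_E z : uwf (plus_ar C) (E z).
Proof. by rewrite /E; case: insub => [x|] //; apply: uwf_ucor. Qed.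

Lemma nleaves_E z : 0 < ar z -> nleaves (E z) = ar z.
Proof.
move=> H; case: (ltnP 1 (ar z)) => H1; first by rewrite (E_big H1) nleaves_ucor.
by rewrite E_small // /nleaves /=; lia.
Qed.

Lemma env_K z w i : i < ar z -> op_out C w = op_in C z i -> 0 < ar w ->
  env_cong C (graft (E z) i (E w)) (E (op_comp C z i w)).
Proof.
move=> Hi Hout Hw0.
have EC := env_congr.
case: (ltnP 1 (ar w)) => Hw; last first.
  have Hw1 : ar w = 1 by lia.
  rewrite (E_small (z := w)) ?Hw1 // graft_leaf_unit.
  have -> : w = op_unit C (op_in C z i) by rewrite -Hout; apply: HC1.
  by rewrite HCru //; apply: (congr_refl EC); apply: uwf_E.
case: (ltnP 1 (ar z)) => Hz; last first.
  have Hz1 : ar z = 1 by lia.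
  have Ez := HC1 Hz1.
  have Hi0 : i = 0 by lia.
  subst i; rewrite (E_small (z := z)) ?Hz1 //=.
  have Hin : op_in C z 0 = op_out C z by rewrite /op_in Ez (HCu _).2 /= -Ez.
  rewrite Hin in Hout.
  rewrite Ez -Hout HClu; apply: (congr_refl EC); apply: uwf_E.
have Hc : 1 < ar (op_comp C z i w).
  rewrite /op_ar (HCc Hi Hout).2 !size_cat size_take size_drop.
  by move: Hi Hz Hw; rewrite /op_ar => Hi Hz Hw; rewrite Hi; lia.
rewrite (E_big Hz) (E_big Hw) (E_big Hc).
apply: gen_cong_incl.
by exists (exist _ z Hz), (exist _ w Hw), (exist (fun x => 1 < ar x) (op_comp C z i w) Hc), i.
Qed.


Lemma cwf_leaves (l : seq 'I_k) : all CW (map Leaf l).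
Proof. by elim: l. Qed.

Lemma env_L S : CW S -> env_cong C (Theta (forget S)) (E (phi S)).
Proof.
have EC := env_congr.
elim/tree_ind': S => [c|g ts IH] HS.
  rewrite Q1 E_small; first by apply: (congr_refl EC).
  by rewrite /op_ar (HCu c).2.
move: (HS) => /andP [/eqP Hm Ha].
set n := size (Gin g).
have Hsz : size ts = n by rewrite /n -Hm size_map.
have IH' : forall t, List.In t ts -> env_cong C (Theta (forget t)) (E (phi t)).
  by move=> t Ht; apply: IH => //; apply: all_In Ha Ht.
have Step1 : env_cong C (Theta (forget (Node g ts))) (Node (xg g) (map (fun t => E (phi t)) ts)).
  have -> : Theta (forget (Node g ts)) = Node (xg g) (map (fun t => Theta (forget t)) ts).
    by rewrite /= /Theta /= -map_comp.
  apply: (cong_node EC); rewrite ?size_map ?plus_ar_xg //.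
  exact: nth_map_In.
set d := (Leaf (Gout g) : ctree k G).
set LS := fun m => Node (xg g) (map (fun t => E (phi t)) (take m ts) ++ drop m (nseq n (Leaf tt))).
set RS := fun m => (Node g (take m ts ++ drop m (map Leaf (Gin g))) : ctree k G).
have cRS : forall m, CW (RS m).
  move=> m; rewrite /RS /= map_cat map_take map_drop Hm -map_comp map_id cat_take_drop eqxx /=.
  rewrite all_cat; case/andP: (all_take_drop m Ha) => -> _ /=.
  by case/andP: (all_take_drop m (cwf_leaves (Gin g))).
have leavesRS : forall m, m <= n -> leaves (RS m) = flatten (map leaves (take m ts)) ++ drop m (Gin g).
  by move=> m Hmn; rewrite /RS /= map_cat flatten_cat map_drop -map_comp -map_drop flatten_singles.
have sizeF : forall m, size (flatten (map leaves (take m ts))) = sumn (map nleaves (take m ts)).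
  by move=> m; rewrite size_flatten /shape -map_comp.
have cwf_ts : forall m, m < n -> CW (nth d ts m).
  by move=> m Hmn; apply: (all_In Ha); apply: In_nth; rewrite Hsz.
have Hpre : forall m, map nleaves (map (fun t => E (phi t)) (take m ts)) = map nleaves (take m ts).
  move=> m; rewrite -map_comp; apply: map_In => t Ht0; have Ht := In_take Ht0; rewrite /=.
  have cT := all_In Ha Ht.
  by rewrite nleaves_E ar_phi // cwf_pos.
have Step2 : forall m, m <= n -> env_cong C (LS m) (E (phi (RS m))).
  elim => [_|m IHm Hmn].
    rewrite /LS /RS /= take0 !drop0 /=.
    have -> : phi (Node g (map Leaf (Gin g))) = val (xg g) by [].
    have -> : Node (xg g) (nseq n (Leaf tt)) = ucor (plus_ar C) (xg g) by rewrite /ucor plus_ar_xg.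
    by rewrite E_val; apply: (congr_refl EC); apply: uwf_ucor.
  set t := nth d ts m.
  have Ht : CW t := cwf_ts m Hmn.
  set p := sumn (map nleaves (take m ts)).
  have T1 : take m.+1 ts = take m ts ++ [:: t] by rewrite (take_nth d) ?Hsz // -cats1.
  have D1 : drop m (nseq n (Leaf tt : tree unit (Cplus C))) = Leaf tt :: drop m.+1 (nseq n (Leaf tt)).
    by rewrite (drop_nth (Leaf tt)) ?size_nseq // nth_nseq Hmn.
  have D2 : drop m (map (@Leaf 'I_k G) (Gin g)) = Leaf (nth (Gout g) (Gin g) m) :: drop m.+1 (map Leaf (Gin g)).
    by rewrite (drop_nth d) ?size_map // (nth_map (Gout g)).
  have ELS : LS m.+1 = graft (LS m) p (E (phi t)).
    by rewrite /LS D1 /p -Hpre graft_pre T1 map_cat -catA.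
  have ERS : RS m.+1 = graft (RS m) p t.
    by rewrite /RS D2 /p graft_pre T1 -catA.
  have HnRS : nleaves (RS m) = p + (n - m).
    by rewrite /nleaves leavesRS ?(ltnW Hmn) // size_cat sizeF size_drop.
  have Hp : p < nleaves (RS m) by rewrite HnRS; lia.
  have Hok : cok Gout (RS m) p t.
    rewrite /cok Hp andTb; apply/eqP; rewrite leavesRS ?(ltnW Hmn) // nth_cat sizeF ltnn subnn nth_drop addn0.
    by rewrite -Hm (set_nth_default (cout d)) ?size_map ?Hsz // (nth_map d) ?Hsz.
  have Ephi : phi (RS m.+1) = op_comp C (phi (RS m)) p (phi t) by rewrite ERS Q3.
  rewrite ELS Ephi.
  have IHm' := IHm (ltnW Hmn).
  apply: (congr_trans EC (t := graft (E (phi (RS m))) p (E (phi t)))).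
    apply: (congr_graft EC) => //; first by apply: (congr_refl EC); apply: uwf_E.
    have [_ _ ->] := congr_prof EC IHm'.
    by rewrite nleaves_E ar_phi // cwf_pos.
  apply: env_K; first by rewrite ar_phi.
    rewrite (Q2 Ht).1 /op_in (Q2 (cRS m)).2.
    by rewrite (set_nth_default (cout t)) -?(eqP (proj2 (andP Hok))) // -/(nleaves _).
  by rewrite ar_phi // cwf_pos.
have := Step2 n (leqnn n).
rewrite /LS /RS !take_oversize ?Hsz // !drop_oversize ?size_nseq ?size_map // !cats0 => H.
exact: (congr_trans EC Step1 H).
Qed.

Definition Sx (x : Cplus C) : ctree k G :=
  proj1_sig (constructive_indefinite_description _ (Q4 (val x))).

Lemma Sx_spec x : CW (Sx x) /\ phi (Sx x) = val x.
Proof. exact: (proj2_sig (constructive_indefinite_description _ (Q4 (val x)))). Qed.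

Definition fS (x : Cplus C) : tree unit G := forget (Sx x).

Lemma fS_nleaves x : nleaves (fS x) = plus_ar C x.
Proof. by have [H1 H2] := Sx_spec x; rewrite /fS nleaves_forget -ar_phi // H2. Qed.

Lemma fS_uwf x : uwf gar (fS x).
Proof. by have [H1 H2] := Sx_spec x; apply: cwf_forget. Qed.

Definition Psi : tree unit (Cplus C) -> tree unit G := ext fS.

Lemma uwf_Psi A : uwf (plus_ar C) A -> uwf gar (Psi A).
Proof. exact: (uwf_ext fS_nleaves fS_uwf). Qed.

Lemma nleaves_Psi A : uwf (plus_ar C) A -> nleaves (Psi A) = nleaves A.
Proof. exact: (nleaves_ext fS_nleaves). Qed.

Lemma Theta_Psi A : uwf (plus_ar C) A -> env_cong C (Theta (Psi A)) A.
Proof.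
have EC := env_congr.
elim/tree_ind': A => [[]|x As IH]; first by move=> _; apply: (congr_refl EC).
move=> HA; move: (HA) => /andP [/eqP Hs Ha].
have -> : Theta (Psi (Node x As)) = subst (Theta (fS x)) (map Theta (map Psi As)).
  by rewrite /Theta -tmap_subst.
rewrite -(@subst_ucor _ (plus_ar C) x As) //.
have [H1 H2] := Sx_spec x.
apply: (cong_subst EC).
- have := env_L H1; rewrite H2 E_val; exact.
- by rewrite !size_map.
- rewrite -map_comp size_map ; apply: nth_map_In_id => t Ht /=.
  by apply: IH => //; apply: all_In Ha Ht.
- by rewrite !size_map /Theta nleaves_tmap fS_nleaves.
Qed.

Lemma Psi_Theta (S : tree unit G) : uwf gar S -> ucong gar Rf (Psi (Theta S)) S.
Proof.
have UC := ucong_congr.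
elim/tree_ind': S => [[]|g ts IH]; first by move=> _; apply: (congr_refl UC).
move=> HS; move: (HS) => /andP [/eqP Hs Ha].
have -> : Psi (Theta (Node g ts)) = subst (fS (xg g)) (map Psi (map Theta ts)) by [].
rewrite -(@subst_ucor _ gar g ts) //.
have [H1 H2] := Sx_spec (xg g).
apply: (cong_subst UC).
- rewrite -forget_ccor; apply: ccong_forget => //; first exact: cwf_ccor.
- by rewrite !size_map.
- rewrite -map_comp size_map ; apply: nth_map_In_id => t Ht /=.
  by apply: IH => //; apply: all_In Ha Ht.
- by rewrite !size_map fS_nleaves plus_ar_xg.
Qed.

Lemma Psi_env A B : env_cong C A B -> ucong gar Rf (Psi A) (Psi B).
Proof.
have UC := ucong_congr.
move=> H.
suff : [/\ uwf (plus_ar C) A, uwf (plus_ar C) B, nleaves A = nleaves B & ucong gar Rf (Psi A) (Psi B)] by case.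
apply: (H (fun A B => [/\ uwf (plus_ar C) A, uwf (plus_ar C) B, nleaves A = nleaves B & ucong gar Rf (Psi A) (Psi B)])).
- split; [|split; [|split; [|split]]].
  + by move=> ? ? [].
  + by move=> A0 H0; split => //; apply: (congr_refl UC); apply: uwf_Psi.
  + by move=> ? ? [? ? ? H1]; split => //; apply: (congr_sym UC).
  + by move=> ? ? ? [? ? E1 H1] [? ? E2 H2]; split => //; [rewrite E1 | apply: (congr_trans UC H1 H2)].
  + move=> S1 S1' T1 T1' i [c1 c2 p1 u1] [c3 c4 p2 u2] Hok; rewrite /uok in Hok.
    split; try exact: uwf_graft.
      by rewrite !nleaves_graft -?p1 // p1 p2.
    rewrite /Psi !(ext_graft fS_nleaves) -?p1 //.
    by apply: (congr_graft UC) => //; rewrite (nleaves_ext fS_nleaves).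
- move=> a b Hab; have [wa [wb nab]] := env_rel_R0u Hab.
  split => //.
  case: Hab => [x [y [xy [i [Hi [Hout [Hxy [Ea Eb]]]]]]]].
  have [Sx1 Sx2] := Sx_spec x; have [Sy1 Sy2] := Sx_spec y; have [Sz1 Sz2] := Sx_spec xy.
  have Hi' : i < nleaves (Sx x) by rewrite -ar_phi // Sx2.
  have Hok : cok Gout (Sx x) i (Sx y).
    rewrite /cok Hi' /=; apply/eqP.
    rewrite -(Q2 Sy1).1 Sy2 Hout /op_in -Sx2 (Q2 Sx1).2.
    by apply: set_nth_default.
  rewrite Ea Eb /Psi (ext_graft fS_nleaves) ?uwf_ucor ?nleaves_ucor // !(ext_ucor fS_nleaves).
  rewrite /fS -forget_graft; apply: ccong_forget => //.
    by have [] := cwf_graft Sx1 Sy1 Hok.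
  by rewrite Q3 // Sx2 Sy2 Sz2; exact: esym Hxy.
Qed.

Lemma main_sec :
  let gar := fun g : G => size (Gin g) in
  exists Theta : tree unit G -> tree unit (Cplus C),
    (forall S : tree unit G, uwf gar S ->
        uwf (plus_ar C) (Theta S) /\ nleaves (Theta S) = nleaves S) /\
    env_cong C (Theta (Leaf tt)) (Leaf tt) /\
    (forall (S : tree unit G) i (T : tree unit G), uwf gar S -> uwf gar T -> i < nleaves S ->
        env_cong C (Theta (graft S i T)) (graft (Theta S) i (Theta T))) /\
    (forall S T : tree unit G, uwf gar S -> uwf gar T ->
        (ucong gar (forget_rel R) S T <-> env_cong C (Theta S) (Theta T))) /\
    (forall A, uwf (plus_ar C) A ->
        exists S : tree unit G, uwf gar S /\ env_cong C (Theta S) A) /\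
    (forall (g : G) (x : Cplus C), proj1_sig x = phi (ccor Gin g) ->
        env_cong C (Theta (ucor gar g)) (ucor (plus_ar C) x)).
Proof.
move=> gar'; rewrite /gar'.
have EC := env_congr; have UC := ucong_congr.
exists Theta; split; [|split; [|split; [|split; [|split]]]].
- by move=> S HS; split; [apply: uwf_Theta | rewrite /Theta nleaves_tmap].
- by apply: (congr_refl EC).
- move=> S i T HS HT Hi; rewrite /Theta tmap_graft; apply: (congr_refl EC).
  by apply: uwf_graft; apply: uwf_Theta.
- move=> S T HS HT; split.
  + move=> H.
    suff : [/\ uwf gar S, uwf gar T & env_cong C (Theta S) (Theta T)] by case.
    apply: (H (fun S T : tree unit G => [/\ uwf gar S, uwf gar T & env_cong C (Theta S) (Theta T)])) => //.
    * split; [|split; [|split; [|split]]].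
      -- move=> ? ? [H1 H2 H3]; split => //; split => //.
         by have [_ _] := congr_prof EC H3; rewrite /Theta !nleaves_tmap.
      -- by move=> S0 H0; split => //; apply: (congr_refl EC); apply: uwf_Theta.
      -- by move=> ? ? [? ? H1]; split => //; apply: (congr_sym EC).
      -- by move=> ? ? ? [? ? H1] [? ? H2]; split => //; apply: (congr_trans EC H1 H2).
      -- move=> S1 S1' T1 T1' i [c1 c2 u1] [c3 c4 u2] Hok; rewrite /uok in Hok.
         split; try exact: uwf_graft.
         rewrite /Theta !tmap_graft; apply: (congr_graft EC) => //.
         by rewrite nleaves_tmap.
    * move=> a b [S0 [T0 [HST [-> ->]]]].
      case: HR => Hw _; have [cS cT] := Hw S0 T0 HST.
      split; try exact: cwf_forget.
      apply: (congr_trans EC (env_L cS)); rewrite (phi_R HST).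
      exact: (congr_sym EC (env_L cT)).
  + move=> H; have H' := Psi_env H.
    apply: (congr_trans UC (congr_sym UC (Psi_Theta HS))).
    exact: (congr_trans UC H' (Psi_Theta HT)).
- move=> A HA; exists (Psi A); split; [exact: uwf_Psi | exact: Theta_Psi].
- move=> g x Hx.
  have -> : x = xg g by apply: val_inj; rewrite /= Hx.
  have -> : Theta (ucor gar g) = ucor (plus_ar C) (xg g).
    by rewrite /ucor /Theta /= map_nseq plus_ar_xg.
  by apply: (congr_refl EC); apply: uwf_ucor.
Qed.

End Main.

Theorem proposition1p7 (k : nat) (k_pos : 0 < k) (C : coperad k)
    (HC : is_coperad C)
    (G : Type) (Gout : G -> 'I_k) (Gin : G -> seq 'I_k)
    (HG : forall g, 2 <= size (Gin g))
    (R : ctree k G -> ctree k G -> Prop)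
    (HR : is_equiv_on (cwf Gout Gin) R)
    (phi : ctree k G -> op_car C)
    (Hphi : presents C Gout Gin R phi) :
  let gar := fun g : G => size (Gin g) in
  exists Theta : tree unit G -> tree unit (Cplus C),
    (forall S, uwf gar S ->
        uwf (plus_ar C) (Theta S) /\ nleaves (Theta S) = nleaves S) /\
    env_cong C (Theta (Leaf tt)) (Leaf tt) /\
    (forall S i T, uwf gar S -> uwf gar T -> i < nleaves S ->
        env_cong C (Theta (graft S i T)) (graft (Theta S) i (Theta T))) /\
    (forall S T, uwf gar S -> uwf gar T ->
        (ucong gar (forget_rel R) S T <-> env_cong C (Theta S) (Theta T))) /\
    (forall A, uwf (plus_ar C) A ->
        exists S, uwf gar S /\ env_cong C (Theta S) A) /\
    (forall (g : G) (x : Cplus C), proj1_sig x = phi (ccor Gin g) ->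
        env_cong C (Theta (ucor gar g)) (ucor (plus_ar C) x)).
Proof. exact: (main_sec HC HG HR Hphi). Qed.
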